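(* Let $\nu:\mathcal{P}(\mathbf{N})\to\mathbf{R}$ be a normalized capacity and let $\mathcal{I}$ be an ideal on $\mathbf{N}$. The following are equivalent: (i) $\nu$ is $\mathcal{I}$-invariant; (ii) there exists a normalized capacity $\rho:\mathscr{B}(\mathrm{Ult}(\mathcal{I}))\to\mathbf{R}$ such that for every $x\in\ell_\infty$, $$\int_{\mathbf{N}} x\,\mathrm{d}\nu=\int_{\mathrm{Ult}(\mathcal{I})}\Big(\int_{\mathbf{N}} x\,\mathrm{d}\mu_{\mathcal{F}}\Big)\,\mathrm{d}\rho(\mathcal{F});$$ (iii) there exists a normalized capacity $\rho:\mathscr{B}(\mathrm{Ult}(\mathcal{I}))\to\mathbf{R}$ such that for every $A\subseteq\mathbf{N}$, $$\nu(A)=\int_{\mathrm{Ult}(\mathcal{I})}\mu_{\mathcal{F}}(A)\,\mathrm{d}\rho(\mathcal{F}).$$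
   Context: $\mathbf{N}$ is the set of positive integers. Given a measurable space $(S,\Sigma)$, a normalized capacity $\nu:\Sigma\to\mathbf{R}$ is a set function with $\nu(A)\le\nu(B)$ whenever $A\subseteq B$, $\nu(\emptyset)=0$, $\nu(S)=1$. An ideal on $\mathbf{N}$ is a family $\mathcal{I}\subseteq\mathcal{P}(\mathbf{N})$ closed under subsets and finite unions, with $\mathbf{N}\notin\mathcal{I}$, and (standing assumption) containing all finite subsets of $\mathbf{N}$. Its dual filter is $\mathcal{I}^\star=\{A\subseteq\mathbf{N}:\mathbf{N}\setminus A\in\mathcal{I}\}$. A normalized capacity $\nu$ on $\mathcal{P}(\mathbf{N})$ is $\mathcal{I}$-invariant if $\nu(A)=\nu(B)$ whenever the symmetric difference $A\triangle B\in\mathcal{I}$. $\beta\mathbf{N}$ denotes the space of ultrafilters on $\mathbf{N}$ with the topology generated by the clopen basis $\{\{\mathcal{F}\in\beta\mathbf{N}:A\in\mathcal{F}\}:A\subseteq\mathbf{N}\}$; $\mathrm{Ult}(\mathcal{I})=\{\mathcal{F}\in\beta\mathbf{N}:\mathcal{I}^\star\subseteq\mathcal{F}\}$ with the relative topology, and $\mathscr{B}(\cdot)$ denotes the Borel $\sigma$-algebra. For $\mathcal{F}\in\mathrm{Ult}(\mathcal{I})$, $\mu_{\mathcal{F}}:\mathcal{P}(\mathbf{N})\to\{0,1\}$ is given by $\mu_{\mathcal{F}}(A)=1$ iff $A\in\mathcal{F}$. $\ell_\infty$ is the space of bounded real sequences. For a bounded function $x$ on $S$ and a normalized capacity $\nu$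 (defined at least on the upper level sets of $x$), the Choquet integral is $\int_S x\,\mathrm{d}\nu=\int_0^\infty\nu(x\ge t)\,\mathrm{d}t+\int_{-\infty}^0[\nu(x\ge t)-\nu(S)]\,\mathrm{d}t$ (improper Riemann integrals). *)

(* Defs.v *)
From Stdlib Require Import Reals Lra ClassicalDescription.
From Coquelicot Require Import Coquelicot.
Open Scope R_scope.

Definition PosNat : Type := {n : nat | (0 < n)%nat}.

Definition compl (A : PosNat -> Prop) : PosNat -> Prop := fun n => ~ A n.
Definition symdiff (A B : PosNat -> Prop) : PosNat -> Prop :=
  fun n => (A n /\ ~ B n) \/ (B n /\ ~ A n).
Definition finite_set (A : PosNat -> Prop) : Prop :=
  exists m : nat, forall n : PosNat, A n -> (proj1_sig n < m)%nat.

(* Ideal on N (with the standing assumption: contains all finite sets). *)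
Definition is_ideal (I : (PosNat -> Prop) -> Prop) : Prop :=
  (forall A B : PosNat -> Prop, I B -> (forall n, A n -> B n) -> I A) /\
  (forall A B : PosNat -> Prop, I A -> I B -> I (fun n => A n \/ B n)) /\
  ~ I (fun _ => True) /\
  (forall A : PosNat -> Prop, finite_set A -> I A).

Definition dual_filter (I : (PosNat -> Prop) -> Prop) (A : PosNat -> Prop) : Prop :=
  I (compl A).

Definition normalized_capacity (nu : (PosNat -> Prop) -> R) : Prop :=
  (forall A B : PosNat -> Prop, (forall n, A n -> B n) -> nu A <= nu B) /\
  nu (fun _ => False) = 0 /\ nu (fun _ => True) = 1.

Definition I_invariant (I : (PosNat -> Prop) -> Prop) (nu : (PosNat -> Prop) -> R) : Prop :=
  forall A B : PosNat -> Prop, I (symdiff A B) -> nu A = nu B.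

Definition is_ultrafilter (F : (PosNat -> Prop) -> Prop) : Prop :=
  ~ F (fun _ => False) /\
  (forall A B : PosNat -> Prop, F A -> (forall n, A n -> B n) -> F B) /\
  (forall A B : PosNat -> Prop, F A -> F B -> F (fun n => A n /\ B n)) /\
  (forall A : PosNat -> Prop, F A \/ F (compl A)).

Definition in_Ult (I : (PosNat -> Prop) -> Prop) (F : (PosNat -> Prop) -> Prop) : Prop :=
  is_ultrafilter F /\ (forall A, dual_filter I A -> F A).

Definition Ult (I : (PosNat -> Prop) -> Prop) : Type :=
  {F : (PosNat -> Prop) -> Prop | in_Ult I F}.

(* Open sets of Ult(I) for the relative topology of beta N, whose topology
   is generated by the clopen basis {F | A \in F}. *)
Definition ult_open (I : (PosNat -> Prop) -> Prop) (O : Ult I -> Prop) : Prop :=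
  forall F : Ult I, O F ->
    exists A : PosNat -> Prop, proj1_sig F A /\
      (forall G : Ult I, proj1_sig G A -> O G).

Inductive ult_borel (I : (PosNat -> Prop) -> Prop) : (Ult I -> Prop) -> Prop :=
| ub_open (O : Ult I -> Prop) : ult_open I O -> ult_borel I O
| ub_compl (B : Ult I -> Prop) : ult_borel I B -> ult_borel I (fun F => ~ B F)
| ub_union (B : nat -> Ult I -> Prop) :
    (forall k, ult_borel I (B k)) -> ult_borel I (fun F => exists k, B k F)
| ub_ext (B C : Ult I -> Prop) :
    ult_borel I B -> (forall F, B F <-> C F) -> ult_borel I C.

Definition borel_normalized_capacity (I : (PosNat -> Prop) -> Prop)
    (rho : (Ult I -> Prop) -> R) : Prop :=
  (forall A B : Ult I -> Prop, ult_borel I A -> ult_borel I B ->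
     (forall F, A F -> B F) -> rho A <= rho B) /\
  rho (fun _ => False) = 0 /\ rho (fun _ => True) = 1.

Definition mu (F : (PosNat -> Prop) -> Prop) (A : PosNat -> Prop) : R :=
  if excluded_middle_informative (F A) then 1 else 0.

Definition ell_inf (x : PosNat -> R) : Prop :=
  exists M : R, forall n, Rabs (x n) <= M.

Definition choquet {T : Type} (nu : (T -> Prop) -> R) (x : T -> R) : R :=
  RInt_gen (fun t => nu (fun s => t <= x s)) (at_point 0) (Rbar_locally p_infty)
  + RInt_gen (fun t => nu (fun s => t <= x s) - nu (fun _ => True))
      (Rbar_locally m_infty) (at_point 0).

(* Main.v *)
Require Import Defs.
From Stdlib Require Import Reals Lra Classical FunctionalExtensionality PropExtensionality ClassicalDescription.
From Coquelicot Require Import Coquelicot.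
Open Scope R_scope.


Lemma ball_R (c e x : R) : ball c e x <-> Rabs (x - c) < e.
Proof. reflexivity. Qed.

Lemma sandwich (f : R -> R) a b : a < b ->
 (forall eps, 0 < eps -> exists g1 g2, ex_RInt g1 a b /\ ex_RInt g2 a b /\
    (forall t, a <= t <= b -> g1 t <= f t <= g2 t) /\ RInt g2 a b - RInt g1 a b < eps) ->
 ex_RInt f a b.
Proof.
  intros Hab H.
  pose (Ff := filtermap (fun ptd => scal (sign (b-a)) (Riemann_sum f ptd)) (Riemann_fine a b)).
  assert (PF : ProperFilter Ff) by (apply filtermap_proper_filter; apply Riemann_fine_filter).
  assert (Hs : sign (b - a) = 1) by (apply sign_eq_1; lra).
  assert (Hfine : Riemann_fine a b (fun ptd => pointed_subdiv ptd /\ SF_h ptd = Rmin a b /\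
            seq.last (SF_h ptd) (SF_lx ptd) = Rmax a b)).
  { unfold Riemann_fine, within. apply filter_forall. auto. }
  assert (CF : cauchy Ff).
  { intros eps. destruct (H (eps/3)) as [g1 [g2 [E1 [E2 [B D]]]]].
    { destruct eps; simpl; lra. }
    assert (e3 : 0 < eps / 3) by (destruct eps; simpl; lra).
    pose (d := mkposreal _ e3).
    pose proof (proj1 (filterlim_locally _ _) (RInt_correct _ _ _ E1) d) as C1.
    pose proof (proj1 (filterlim_locally _ _) (RInt_correct _ _ _ E2) d) as C2.
    exists ((RInt g1 a b + RInt g2 a b)/2).
    unfold Ff, filtermap.
    generalize (filter_and _ _ Hfine (filter_and _ _ C1 C2)).
    apply filter_imp. intros ptd [[Hp [Hh Hl]] [K1 K2]].
    rewrite Hs in *. change (scal 1 ?x) with (1 * x) in *. rewrite !Rmult_1_l in *.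
    apply ball_R. apply ball_R in K1. apply ball_R in K2. simpl in K1, K2.
    assert (L1 : Riemann_sum g1 ptd <= Riemann_sum f ptd).
    { apply Riemann_sum_le; auto. intros t Ht. rewrite Hl, Hh in Ht.
      rewrite Rmin_left, Rmax_right in Ht by lra. apply B; auto. }
    assert (L2 : Riemann_sum f ptd <= Riemann_sum g2 ptd).
    { apply Riemann_sum_le; auto. intros t Ht. rewrite Hl, Hh in Ht.
      rewrite Rmin_left, Rmax_right in Ht by lra. apply B; auto. }
    unfold d in K1, K2; simpl in K1, K2.
    apply Rabs_def2 in K1. apply Rabs_def2 in K2. unfold minus, plus, opp in K1, K2; simpl in K1, K2.
    destruct eps; simpl in *.
    assert (e1: forall g, @Riemann_sum (NormedModule.ModuleSpace R_AbsRing (CompleteNormedModule.NormedModule R_AbsRing R_CompleteNormedModule)) g ptd = @Riemann_sum R_ModuleSpace g ptd) by reflexivity.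
    assert (e2: forall g, @Riemann_sum (NormedModule.ModuleSpace R_AbsRing R_NormedModule) g ptd = @Riemann_sum R_ModuleSpace g ptd) by reflexivity.
    rewrite !e1 in K1, K2. rewrite (e2 g1) in L1; rewrite (e2 g2) in L2. apply Rabs_def1; lra. }
  exists (lim Ff). unfold is_RInt. apply filterlim_locally. intros eps.
  exact (complete_cauchy Ff PF CF eps).
Qed.

Definition noninc (f : R -> R) := forall x y, x <= y -> f y <= f x.

Lemma mono_steps (f : R -> R) (Hf : noninc f) (h : R) (Hh : 0 < h) (k : nat) :
  forall c d, c <= d <= c + INR k * h ->
  exists g1 g2, ex_RInt g1 c d /\ ex_RInt g2 c d /\
    (forall t, c <= t <= d -> g1 t <= f t <= g2 t) /\
    RInt g2 c d - RInt g1 c d <= h * (f c - f d).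
Proof.
  assert (short : forall c d, c <= d <= c + h -> exists g1 g2, ex_RInt g1 c d /\ ex_RInt g2 c d /\
    (forall t, c <= t <= d -> g1 t <= f t <= g2 t) /\
    RInt g2 c d - RInt g1 c d <= h * (f c - f d)).
  { intros c d Hcd. exists (fun _ => f d), (fun _ => f c).
    split; [apply ex_RInt_const|]. split; [apply ex_RInt_const|]. split.
    - intros t Ht. split; apply Hf; lra.
    - rewrite !RInt_const. change (scal (d - c) (f c)) with ((d - c) * f c).
      change (scal (d - c) (f d)) with ((d - c) * f d).
      assert (f d <= f c) by (apply Hf; lra). nra. }
  induction k as [|k IH]; intros c d Hcd.
  - apply short. simpl in Hcd. lra.
  - destruct (Rle_dec d (c + h)) as [Hs|Hs].
    + apply short; lra.
    + rewrite S_INR in Hcd.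
      destruct (IH (c + h) d) as [g1 [g2 [E1 [E2 [B D]]]]]; [lra|].
      pose (G1 := fun t => if Rle_dec t (c + h) then f (c + h) else g1 t).
      pose (G2 := fun t => if Rle_dec t (c + h) then f c else g2 t).
      assert (X1 : ex_RInt G1 c (c + h)).
      { apply (ex_RInt_ext (fun _ => f (c + h))); [|apply ex_RInt_const].
        intros t Ht. rewrite Rmin_left, Rmax_right in Ht by lra. unfold G1.
        destruct (Rle_dec t (c + h)); [reflexivity|lra]. }
      assert (X2 : ex_RInt G2 c (c + h)).
      { apply (ex_RInt_ext (fun _ => f c)); [|apply ex_RInt_const].
        intros t Ht. rewrite Rmin_left, Rmax_right in Ht by lra. unfold G2.
        destruct (Rle_dec t (c + h)); [reflexivity|lra]. }
      assert (Y1 : ex_RInt G1 (c + h) d).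
      { apply (ex_RInt_ext g1); [|exact E1].
        intros t Ht. rewrite Rmin_left, Rmax_right in Ht by lra. unfold G1.
        destruct (Rle_dec t (c + h)); [lra|reflexivity]. }
      assert (Y2 : ex_RInt G2 (c + h) d).
      { apply (ex_RInt_ext g2); [|exact E2].
        intros t Ht. rewrite Rmin_left, Rmax_right in Ht by lra. unfold G2.
        destruct (Rle_dec t (c + h)); [lra|reflexivity]. }
      exists G1, G2. split; [exact (ex_RInt_Chasles _ _ _ _ X1 Y1)|].
      split; [exact (ex_RInt_Chasles _ _ _ _ X2 Y2)|]. split.
      * intros t Ht. unfold G1, G2. destruct (Rle_dec t (c + h)).
        -- split; apply Hf; lra.
        -- apply B; lra.
      * rewrite <- (RInt_Chasles G1 c (c + h) d X1 Y1).
        rewrite <- (RInt_Chasles G2 c (c + h) d X2 Y2).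
        rewrite (RInt_ext G1 (fun _ => f (c + h)) c (c + h)).
        2:{ intros t Ht. rewrite Rmin_left, Rmax_right in Ht by lra. unfold G1.
            destruct (Rle_dec t (c + h)); [reflexivity|lra]. }
        rewrite (RInt_ext G2 (fun _ => f c) c (c + h)).
        2:{ intros t Ht. rewrite Rmin_left, Rmax_right in Ht by lra. unfold G2.
            destruct (Rle_dec t (c + h)); [reflexivity|lra]. }
        rewrite (RInt_ext G1 g1 (c + h) d).
        2:{ intros t Ht. rewrite Rmin_left, Rmax_right in Ht by lra. unfold G1.
            destruct (Rle_dec t (c + h)); [lra|reflexivity]. }
        rewrite (RInt_ext G2 g2 (c + h) d).
        2:{ intros t Ht. rewrite Rmin_left, Rmax_right in Ht by lra. unfold G2.
            destruct (Rle_dec t (c + h)); [lra|reflexivity]. }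
        rewrite !RInt_const. change (scal (c + h - c) (f c)) with ((c + h - c) * f c).
        change (scal (c + h - c) (f (c + h))) with ((c + h - c) * f (c + h)).
        change (plus ?x ?y) with (x + y). lra.
Qed.

Lemma noninc_ex_RInt (f : R -> R) : noninc f -> forall a b, ex_RInt f a b.
Proof.
  intros Hf.
  assert (K : forall a b, a < b -> ex_RInt f a b).
  { intros a b Hab. apply sandwich; auto. intros eps Heps.
    assert (Hfab : f b <= f a) by (apply Hf; lra).
    pose (h := eps / (f a - f b + 1)).
    assert (Hh : 0 < h) by (unfold h; apply Rdiv_lt_0_compat; lra).
    assert (Hh2 : h * (f a - f b) < eps).
    { unfold h. apply (Rmult_lt_reg_r (f a - f b + 1)); [lra|].
      field_simplify; [|lra]. nra. }
    destruct (nfloor_ex ((b - a) / h)) as [n Hn].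
    { apply Rdiv_le_0_compat; lra. }
    destruct (mono_steps f Hf h Hh (S n) a b) as [g1 [g2 [E1 [E2 [B D]]]]].
    { split; [lra|]. rewrite S_INR.
      assert ((b - a) / h * h = b - a) by (field; lra).
      assert ((b - a) / h < INR n + 1) by lra. nra. }
    exists g1, g2. repeat split; auto; try apply B; auto. lra. }
  intros a b. destruct (Rtotal_order a b) as [H|[H|H]].
  - apply K; auto.
  - subst. apply ex_RInt_point.
  - apply ex_RInt_swap. apply K; auto.
Qed.

Lemma RInt_gen_pinf (g : R -> R) (M : R) : 0 <= M -> ex_RInt g 0 M ->
  (forall t, M < t -> g t = 0) ->
  RInt_gen g (at_point 0) (Rbar_locally p_infty) = RInt g 0 M.
Proof.
  intros HM E Hz. apply is_RInt_gen_unique.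
  intros P HP. apply (Filter_prod _ _ _ (fun a => a = 0) (fun b => M < b)).
  - reflexivity.
  - exists M. auto.
  - intros x y Hx Hy. simpl. subst x. exists (RInt g 0 M). split.
    + replace (RInt g 0 M) with (plus (RInt g 0 M) (zero : R)).
      2:{ apply plus_zero_r. }
      apply (is_RInt_Chasles g 0 M y (RInt g 0 M) zero). exact (RInt_correct g 0 M E).
      apply (is_RInt_ext (fun _ => @zero R_NormedModule)).
      * intros t Ht. rewrite Rmin_left, Rmax_right in Ht by lra. rewrite Hz by lra. reflexivity.
      * refine (eq_ind _ (fun l => is_RInt _ M y l) (@is_RInt_const R_NormedModule M y zero) _ _).
        unfold scal, zero; simpl. unfold mult; simpl. match goal with |- ?a * 0 = _ => change (@eq R (a * 0) 0) end. ring.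
    + apply locally_singleton. exact HP.
Qed.

Lemma RInt_gen_minf (g : R -> R) (M : R) : 0 <= M -> ex_RInt g (-M) 0 ->
  (forall t, t < -M -> g t = 0) ->
  RInt_gen g (Rbar_locally m_infty) (at_point 0) = RInt g (-M) 0.
Proof.
  intros HM E Hz. apply is_RInt_gen_unique.
  intros P HP. apply (Filter_prod _ _ _ (fun b => b < -M) (fun a => a = 0)).
  - exists (-M). auto.
  - reflexivity.
  - intros x y Hx Hy. simpl. subst y. exists (RInt g (-M) 0). split.
    + replace (RInt g (-M) 0) with (plus (zero : R) (RInt g (-M) 0)).
      2:{ apply plus_zero_l. }
      apply (is_RInt_Chasles g x (-M) 0 zero (RInt g (-M) 0)). 2: exact (RInt_correct g (-M) 0 E).
      apply (is_RInt_ext (fun _ => @zero R_NormedModule)).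
      * intros t Ht. rewrite Rmin_left, Rmax_right in Ht by lra. rewrite Hz by lra. reflexivity.
      * refine (eq_ind _ (fun l => is_RInt _ x (-M) l) (@is_RInt_const R_NormedModule x (-M) zero) _ _).
        unfold scal, zero; simpl. unfold mult; simpl. match goal with |- ?a * 0 = _ => change (@eq R (a * 0) 0) end. ring.
    + apply locally_singleton. exact HP.
Qed.

Lemma RInt_shift (f : R -> R) a b c : ex_RInt f (a+c) (b+c) ->
  RInt (fun t => f (t + c)) a b = RInt f (a + c) (b + c).
Proof.
  intros E.
  assert (E' : ex_RInt f (1 * a + c) (1 * b + c)) by (rewrite !Rmult_1_l; exact E).
  pose proof (RInt_comp_lin f 1 c a b E') as H.
  rewrite !Rmult_1_l in H. rewrite <- H.
  apply RInt_ext. intros t _. rewrite !Rmult_1_l. reflexivity.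
Qed.
Lemma ex_RInt_shift (f : R -> R) a b c : ex_RInt f (a+c) (b+c) ->
  ex_RInt (fun t => f (t + c)) a b.
Proof.
  intros E.
  assert (E' : ex_RInt f (1 * a + c) (1 * b + c)) by (rewrite !Rmult_1_l; exact E).
  pose proof (ex_RInt_comp_lin f 1 c a b E') as H.
  apply (ex_RInt_ext (fun y : R => scal 1 (f (1 * y + c))) _ a b); [|exact H].
  intros t _. rewrite !Rmult_1_l. reflexivity.
Qed.

Lemma RInt_cmp (f g : R -> R) (a b B : R) : a <= b -> noninc f -> noninc g ->
  (forall t, Rabs (f t) <= B) -> (forall t, f t <= g t) ->
  (forall t t', t' < t -> g t <= f t') -> RInt g a b = RInt f a b.
Proof.
  intros Hab Hf Hg HB H1 H2.
  pose proof (noninc_ex_RInt f Hf) as Ef. pose proof (noninc_ex_RInt g Hg) as Eg.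
  apply Rle_antisym.
  2:{ apply RInt_le; auto. }
  assert (Hc : forall eps, 0 < eps -> RInt g a b <= RInt f a b + 2 * eps * B).
  { intros eps He.
    assert (S1 : RInt g a b <= RInt (fun t => f (t + - eps)) a b).
    { apply RInt_le; auto. apply ex_RInt_shift, Ef. intros t Ht. apply H2. lra. }
    rewrite RInt_shift in S1 by apply Ef.
    pose proof (RInt_Chasles f (a + - eps) (b + - eps) b (Ef _ _) (Ef _ _)) as C1.
    pose proof (RInt_Chasles f (a + - eps) a b (Ef _ _) (Ef _ _)) as C2.
    change (plus ?x ?y) with (x + y) in C1, C2.
    pose proof (abs_RInt_le_const f (b + - eps) b B ltac:(lra) (Ef _ _) (fun t _ => HB t)) as A1.
    pose proof (abs_RInt_le_const f (a + - eps) a B ltac:(lra) (Ef _ _) (fun t _ => HB t)) as A2.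
    apply Rabs_le_between in A1. apply Rabs_le_between in A2. lra. }
  destruct (Rle_dec (RInt g a b) (RInt f a b)) as [Hle|Hn]; auto.
  exfalso. apply Rnot_le_lt in Hn.
  assert (HB0 : 0 <= B) by (pose proof (HB 0); pose proof (Rabs_pos (f 0)); lra).
  pose (eps := (RInt g a b - RInt f a b) / (4 * B + 1)).
  assert (He : 0 < eps) by (unfold eps; apply Rdiv_lt_0_compat; lra).
  pose proof (Hc eps He) as Hc'.
  assert (eps * (4 * B + 1) = RInt g a b - RInt f a b) by (unfold eps; field; lra).
  nra.
Qed.

Lemma RInt_step (h : R -> R) a b L v1 v2 : a <= L <= b ->
  (forall t, a < t < L -> h t = v1) -> (forall t, L < t < b -> h t = v2) ->
  ex_RInt h a b /\ RInt h a b = v1 * (L - a) + v2 * (b - L).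
Proof.
  intros HL H1 H2.
  assert (E1 : ex_RInt h a L).
  { apply (ex_RInt_ext (fun _ => v1)); [|apply ex_RInt_const].
    intros t Ht. rewrite Rmin_left, Rmax_right in Ht by lra. symmetry; apply H1; lra. }
  assert (E2 : ex_RInt h L b).
  { apply (ex_RInt_ext (fun _ => v2)); [|apply ex_RInt_const].
    intros t Ht. rewrite Rmin_left, Rmax_right in Ht by lra. symmetry; apply H2; lra. }
  split. exact (ex_RInt_Chasles _ _ _ _ E1 E2).
  rewrite <- (RInt_Chasles h a L b E1 E2).
  rewrite (RInt_ext h (fun _ => v1) a L).
  2:{ intros t Ht. rewrite Rmin_left, Rmax_right in Ht by lra. apply H1; lra. }
  rewrite (RInt_ext h (fun _ => v2) L b).
  2:{ intros t Ht. rewrite Rmin_left, Rmax_right in Ht by lra. apply H2; lra. }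
  rewrite !RInt_const. change (scal ?u ?v) with (u * v). change (plus ?x ?y) with (x + y). match goal with |- ?l = ?r => change (@eq R l r) end. ring.
Qed.

Lemma choquet_ind {T : Type} (k : (T -> Prop) -> R) (P : T -> Prop) : k (fun _ => False) = 0 ->
  choquet k (fun s => if excluded_middle_informative (P s) then 1 else 0) = k P.
Proof.
  intros H0. unfold choquet.
  assert (LT : forall t, 1 < t -> (fun s => t <= (if excluded_middle_informative (P s) then 1 else 0)) = (fun _ => False)).
  { intros t Ht. apply functional_extensionality. intros s. apply propositional_extensionality.
    destruct (excluded_middle_informative (P s)); split; intros; lra. }
  assert (LP : forall t, 0 < t <= 1 -> (fun s => t <= (if excluded_middle_informative (P s) then 1 else 0)) = P).
  { intros t Ht. apply functional_extensionality. intros s. apply propositional_extensionality.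
    destruct (excluded_middle_informative (P s)); split; intros; try tauto; lra. }
  assert (L0 : forall t, t <= 0 -> (fun s => t <= (if excluded_middle_informative (P s) then 1 else 0)) = (fun _ => True)).
  { intros t Ht. apply functional_extensionality. intros s. apply propositional_extensionality.
    destruct (excluded_middle_informative (P s)); split; intros; auto; lra. }
  destruct (RInt_step (fun t => k (fun s => t <= (if excluded_middle_informative (P s) then 1 else 0))) 0 2 1 (k P) 0) as [E R1].
  { lra. }
  { intros t Ht. rewrite LP by lra. reflexivity. }
  { intros t Ht. rewrite LT by lra. exact H0. }
  rewrite (RInt_gen_pinf _ 2) by (auto; try lra; intros t Ht; rewrite LT by lra; exact H0).
  rewrite (RInt_gen_minf _ 0).
  2: lra.
  2: rewrite Ropp_0; apply ex_RInt_point.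
  2:{ intros t Ht. rewrite L0 by lra. ring. }
  rewrite R1. rewrite Ropp_0, RInt_point. change (zero : R) with 0. ring.
Qed.

Lemma choquet_bdd {T : Type} (k : (T -> Prop) -> R) (y : T -> R) (M : R) : 0 <= M ->
  (forall s, Rabs (y s) <= M) -> noninc (fun t => k (fun s => t <= y s)) -> k (fun _ => False) = 0 ->
  choquet k y = RInt (fun t => k (fun s => t <= y s)) 0 (M + 1)
    + RInt (fun t => k (fun s => t <= y s) - k (fun _ => True)) (-(M + 1)) 0.
Proof.
  intros HM Hy Hn H0. unfold choquet.
  rewrite (RInt_gen_pinf _ (M + 1)).
  2: lra.
  2: apply noninc_ex_RInt; auto.
  2:{ intros t Ht. replace (fun s => t <= y s) with (fun _ : T => False). exact H0.
      apply functional_extensionality. intros s. apply propositional_extensionality.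
      pose proof (Hy s) as Hs. apply Rabs_le_between in Hs. split; [tauto|lra]. }
  rewrite (RInt_gen_minf _ (M + 1)). reflexivity.
  - lra.
  - apply noninc_ex_RInt. intros u v Huv. pose proof (Hn u v Huv). simpl in *. lra.
  - intros t Ht. replace (fun s => t <= y s) with (fun _ : T => True). ring.
    apply functional_extensionality. intros s. apply propositional_extensionality.
    pose proof (Hy s) as Hs. apply Rabs_le_between in Hs. split; [lra|tauto].
Qed.

Lemma choquet_step {T : Type} (k : (T -> Prop) -> R) (y : T -> R) (M L : R) : 0 <= M ->
  (forall s, Rabs (y s) <= M) -> noninc (fun t => k (fun s => t <= y s)) -> k (fun _ => False) = 0 ->
  k (fun _ => True) = 1 -> -M <= L <= M ->
  (forall t, t < L -> k (fun s => t <= y s) = 1) -> (forall t, L < t -> k (fun s => t <= y s) = 0) ->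
  choquet k y = L.
Proof.
  intros HM Hy Hn H0 H1 HL A1 A0.
  rewrite (choquet_bdd k y M) by auto.
  destruct (RInt_step (fun t => k (fun s => t <= y s)) 0 (M + 1) (Rmax 0 L) 1 0) as [_ R1].
  { split; [apply Rmax_l|]. apply Rmax_lub; lra. }
  { intros t Ht. apply A1. pose proof (Rmax_r 0 L). destruct (Rle_dec L 0).
    - rewrite Rmax_left in Ht by lra. lra.
    - rewrite Rmax_right in Ht by lra. lra. }
  { intros t Ht. apply A0. pose proof (Rmax_r 0 L). lra. }
  destruct (RInt_step (fun t => k (fun s => t <= y s) - k (fun _ => True)) (-(M + 1)) 0 (Rmin L 0) 0 (-1)) as [_ R2].
  { split; [apply Rmin_glb; lra|apply Rmin_r]. }
  { intros t Ht. rewrite A1, H1. ring. pose proof (Rmin_l L 0). lra. }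
  { intros t Ht. rewrite A0, H1. ring. destruct (Rle_dec L 0).
    - rewrite Rmin_left in Ht by lra. lra.
    - rewrite Rmin_right in Ht by lra. lra. }
  rewrite R1, R2. destruct (Rle_dec L 0).
  - rewrite Rmax_left, Rmin_left by lra. ring.
  - rewrite Rmax_right, Rmin_right by lra. ring.
Qed.


Definition UL_prop (I : (PosNat -> Prop) -> Prop) : Prop :=
  forall Q, ~ I Q -> exists F : Ult I, proj1_sig F Q.

Lemma ult_of (I : (PosNat -> Prop) -> Prop) (F : Ult I) : is_ultrafilter (proj1_sig F).
Proof. exact (proj1 (proj2_sig F)). Qed.

Lemma ult_True (F : (PosNat -> Prop) -> Prop) : is_ultrafilter F -> F (fun _ => True).
Proof.
  intros [Hne [Hup [Hint Hc]]]. destruct (Hc (fun _ => True)) as [H|H].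
  exact H. apply (Hup _ _ H). auto.
Qed.

Lemma cap_nonneg nu : normalized_capacity nu -> forall A, 0 <= nu A /\ nu A <= 1.
Proof.
  intros [Hm [H0 H1]] A. split.
  - rewrite <- H0. apply Hm. tauto.
  - rewrite <- H1. apply Hm. auto.
Qed.

Lemma key_K nu I (HI : is_ideal I) (HU : UL_prop I) (Hnu : normalized_capacity nu)
  (Hinv : I_invariant I nu) A B :
  (forall F : Ult I, proj1_sig F A -> proj1_sig F B) -> nu A <= nu B.
Proof.
  intros H. destruct HI as [Hdown [Hun [HT Hfin]]].
  assert (HAB : I (fun n => A n /\ ~ B n)).
  { apply NNPP. intro Hn. destruct (HU _ Hn) as [F HF].
    pose proof (ult_of I F) as [Hne [Hup [Hint Hc]]].
    assert (FA : proj1_sig F A) by (apply (Hup _ _ HF); tauto).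
    pose proof (H F FA) as FB.
    apply Hne. apply (Hup _ _ (Hint _ _ HF FB)). tauto. }
  rewrite (Hinv A (fun n => A n /\ B n)).
  - apply (proj1 Hnu). tauto.
  - apply (Hdown _ _ HAB). unfold symdiff. tauto.
Qed.

Lemma ext_U I (HI : is_ideal I) A B : I (symdiff A B) ->
  forall F : Ult I, proj1_sig F A -> proj1_sig F B.
Proof.
  intros Hs F FA. pose proof (ult_of I F) as [Hne [Hup [Hint Hc]]]. pose proof (proj2 (proj2_sig F)) as Hd. simpl in *.
  assert (FS : proj1_sig F (compl (symdiff A B))).
  { apply Hd. unfold dual_filter.
    replace (compl (compl (symdiff A B))) with (symdiff A B); auto.
    apply functional_extensionality; intros n; apply propositional_extensionality.
    unfold compl. split; [tauto|apply NNPP]. }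
  apply (Hup _ _ (Hint _ _ FA FS)). intros n [An Sn]. unfold compl, symdiff in Sn.
  apply NNPP. tauto.
Qed.

Lemma U_eq I (HI : is_ideal I) A B : I (symdiff A B) ->
  (fun F : Ult I => proj1_sig F A) = (fun F : Ult I => proj1_sig F B).
Proof.
  intros Hs. apply functional_extensionality; intros F; apply propositional_extensionality.
  split; apply ext_U; auto.
  destruct HI as [Hdown _]. apply (Hdown _ _ Hs). unfold symdiff. tauto.
Qed.

Definition Erho (nu : (PosNat -> Prop) -> R) (I : (PosNat -> Prop) -> Prop) (B : Ult I -> Prop) (r : R) : Prop :=
  exists A, (forall F : Ult I, proj1_sig F A -> B F) /\ r = nu A.

Lemma Erho_bound nu I B : normalized_capacity nu -> bound (Erho nu I B).
Proof.
  intros Hnu. exists 1. intros r [A [_ ->]]. apply (cap_nonneg nu Hnu).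
Qed.

Lemma Erho_ne nu I B : exists r, Erho nu I B r.
Proof.
  exists (nu (fun _ => False)). exists (fun _ => False). split; auto.
  intros F HF. exfalso. exact (proj1 (ult_of I F) HF).
Qed.

Definition rho_cap nu I (Hnu : normalized_capacity nu) (B : Ult I -> Prop) : R :=
  proj1_sig (completeness (Erho nu I B) (Erho_bound nu I B Hnu) (Erho_ne nu I B)).

Lemma rho_ub nu I Hnu B r : Erho nu I B r -> r <= rho_cap nu I Hnu B.
Proof.
  intros Hr. exact (proj1 (proj2_sig (completeness (Erho nu I B) (Erho_bound nu I B Hnu) (Erho_ne nu I B))) r Hr).
Qed.

Lemma rho_lub nu I Hnu B c : (forall r, Erho nu I B r -> r <= c) -> rho_cap nu I Hnu B <= c.
Proof.
  intros Hc. exact (proj2 (proj2_sig (completeness (Erho nu I B) (Erho_bound nu I B Hnu) (Erho_ne nu I B))) c Hc).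
Qed.

Lemma rho_mono nu I Hnu (B B' : Ult I -> Prop) : (forall F, B F -> B' F) ->
  rho_cap nu I Hnu B <= rho_cap nu I Hnu B'.
Proof.
  intros H. apply rho_lub. intros r [A [HA ->]]. apply rho_ub. exists A. split; auto.
Qed.

Lemma rho_U nu I Hnu (HI : is_ideal I) (HU : UL_prop I) (Hinv : I_invariant I nu) A :
  rho_cap nu I Hnu (fun F => proj1_sig F A) = nu A.
Proof.
  apply Rle_antisym.
  - apply rho_lub. intros r [A' [HA ->]]. apply (key_K nu I HI HU Hnu Hinv). exact HA.
  - apply rho_ub. exists A. auto.
Qed.

Lemma rho_False nu I Hnu (HI : is_ideal I) (HU : UL_prop I) (Hinv : I_invariant I nu) :
  rho_cap nu I Hnu (fun _ => False) = 0.
Proof.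
  pose proof (rho_U nu I Hnu HI HU Hinv (fun _ => False)) as H.
  replace (fun F : Ult I => proj1_sig F (fun _ => False)) with (fun _ : Ult I => False) in H.
  - rewrite H. apply (proj2 Hnu).
  - apply functional_extensionality; intros F; apply propositional_extensionality.
    split; [tauto|]. intros HF. exact (proj1 (ult_of I F) HF).
Qed.

Lemma rho_True nu I Hnu (HI : is_ideal I) (HU : UL_prop I) (Hinv : I_invariant I nu) :
  rho_cap nu I Hnu (fun _ => True) = 1.
Proof.
  pose proof (rho_U nu I Hnu HI HU Hinv (fun _ => True)) as H.
  replace (fun F : Ult I => proj1_sig F (fun _ => True)) with (fun _ : Ult I => True) in H.
  - rewrite H. apply (proj2 Hnu).
  - apply functional_extensionality; intros F; apply propositional_extensionality.
    split; [|tauto]. intros _. apply ult_True, ult_of.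
Qed.


Lemma mu_mono F : is_ultrafilter F -> forall A B : PosNat -> Prop, (forall n, A n -> B n) -> mu F A <= mu F B.
Proof.
  intros [Hne [Hup _]] A B H. unfold mu.
  destruct (excluded_middle_informative (F A)); destruct (excluded_middle_informative (F B)); try lra.
  exfalso. apply n. exact (Hup _ _ f H).
Qed.

Lemma mu_False F : is_ultrafilter F -> mu F (fun _ => False) = 0.
Proof.
  intros [Hne _]. unfold mu. destruct (excluded_middle_informative _); tauto.
Qed.

Lemma mu_True F : is_ultrafilter F -> mu F (fun _ => True) = 1.
Proof.
  intros HF. unfold mu. destruct (excluded_middle_informative _); auto.
  exfalso. apply n. apply ult_True; auto.
Qed.

Lemma lim_exists (F : (PosNat -> Prop) -> Prop) (HF : is_ultrafilter F) (x : PosNat -> R) (M : R)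
  (HM : 0 <= M) (Hx : forall n, Rabs (x n) <= M) :
  exists L, -M <= L <= M /\ (forall t, t < L -> F (fun s => t <= x s)) /\
    (forall t, L < t -> ~ F (fun s => t <= x s)).
Proof.
  destruct HF as [Hne [Hup [Hint Hc]]] eqn:HF'.
  pose (S := fun t => F (fun s => t <= x s)).
  assert (SM : forall t, S t -> t <= M).
  { intros t Ht. destruct (Rle_dec t M); auto. exfalso. apply Hne.
    apply (Hup _ _ Ht). intros s Hs. pose proof (Hx s) as H. apply Rabs_le_between in H. lra. }
  assert (Sm : S (-M)).
  { apply (Hup _ _ (ult_True F HF)). intros s _. pose proof (Hx s) as H. apply Rabs_le_between in H. lra. }
  destruct (completeness S) as [L [H1 H2]].
  { exists M. exact SM. }
  { exists (-M). exact Sm. }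
  exists L. split; [split|split].
  - apply H1. exact Sm.
  - apply H2. exact SM.
  - intros t Ht. apply NNPP. intros Hn.
    assert (L <= t); [|lra]. apply H2. intros s Hs. destruct (Rle_dec s t); auto.
    exfalso. apply Hn. apply (Hup _ _ Hs). intros m Hm. lra.
  - intros t Ht Hf. assert (t <= L) by (apply H1; exact Hf). lra.
Qed.

Lemma phi_props (F : (PosNat -> Prop) -> Prop) (HF : is_ultrafilter F) (x : PosNat -> R) (M : R)
  (HM : 0 <= M) (Hx : forall n, Rabs (x n) <= M) :
  (forall t, F (fun s => t <= x s) -> t <= choquet (mu F) x) /\
  (forall t t', t' < t -> t <= choquet (mu F) x -> F (fun s => t' <= x s)) /\
  Rabs (choquet (mu F) x) <= M.
Proof.
  destruct (lim_exists F HF x M HM Hx) as [L [HL [A1 A0]]].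
  assert (E : choquet (mu F) x = L).
  { apply (choquet_step (mu F) x M L); auto.
    - intros u v Huv. apply mu_mono; auto. intros s Hs. lra.
    - apply mu_False; auto.
    - apply mu_True; auto.
    - intros t Ht. unfold mu. destruct (excluded_middle_informative _); auto.
      exfalso. apply n. apply A1; auto.
    - intros t Ht. unfold mu. destruct (excluded_middle_informative _); auto.
      exfalso. exact (A0 t Ht f). }
  rewrite E. split; [|split].
  - intros t Ht. destruct (Rle_dec t L); auto. exfalso. apply (A0 t); auto; lra.
  - intros t t' H1 H2. apply A1. lra.
  - apply Rabs_le_between. lra.
Qed.


Lemma ind_bounded (A : PosNat -> Prop) : ell_inf (fun s => if excluded_middle_informative (A s) then 1 else 0).
Proof.
  exists 1. intros n. destruct (excluded_middle_informative (A n)); rewrite ?Rabs_R1, ?Rabs_R0; lra.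
Qed.

Lemma dir_iii_i nu I (HI : is_ideal I) (rh : (Ult I -> Prop) -> R) :
  borel_normalized_capacity I rh ->
  (forall A : PosNat -> Prop, nu A = choquet rh (fun F : Ult I => mu (proj1_sig F) A)) ->
  I_invariant I nu.
Proof.
  intros [_ [H0 _]] Hrep A B Hs. rewrite (Hrep A), (Hrep B). unfold mu.
  rewrite (choquet_ind rh (fun F : Ult I => proj1_sig F A) H0).
  rewrite (choquet_ind rh (fun F : Ult I => proj1_sig F B) H0).
  rewrite (U_eq I HI A B Hs). reflexivity.
Qed.

Lemma dir_ii_i nu I (Hnu : normalized_capacity nu) (HI : is_ideal I) (rh : (Ult I -> Prop) -> R) :
  borel_normalized_capacity I rh ->
  (forall x : PosNat -> R, ell_inf x ->
       choquet nu x = choquet rh (fun F : Ult I => choquet (mu (proj1_sig F)) x)) ->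
  I_invariant I nu.
Proof.
  intros Hr Hrep. apply (dir_iii_i nu I HI rh Hr). intros A.
  pose proof (Hrep _ (ind_bounded A)) as H.
  rewrite (choquet_ind nu A (proj1 (proj2 Hnu))) in H. rewrite H. f_equal.
  apply functional_extensionality. intros F.
  apply choquet_ind. apply mu_False. apply ult_of.
Qed.

Lemma dir_i_iii nu I (Hnu : normalized_capacity nu) (HI : is_ideal I) (HU : UL_prop I) :
  I_invariant I nu ->
  exists rh : (Ult I -> Prop) -> R, borel_normalized_capacity I rh /\
     forall A : PosNat -> Prop, nu A = choquet rh (fun F : Ult I => mu (proj1_sig F) A).
Proof.
  intros Hinv. exists (rho_cap nu I Hnu). split.
  - split; [intros A B _ _ H; apply rho_mono; auto|].
    split; [apply rho_False|apply rho_True]; auto.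
  - intros A. unfold mu.
    rewrite (choquet_ind (rho_cap nu I Hnu) (fun F : Ult I => proj1_sig F A)).
    + symmetry. apply rho_U; auto.
    + apply rho_False; auto.
Qed.

Lemma dir_i_ii nu I (Hnu : normalized_capacity nu) (HI : is_ideal I) (HU : UL_prop I) :
  I_invariant I nu ->
  exists rh : (Ult I -> Prop) -> R, borel_normalized_capacity I rh /\
     forall x : PosNat -> R, ell_inf x ->
       choquet nu x = choquet rh (fun F : Ult I => choquet (mu (proj1_sig F)) x).
Proof.
  intros Hinv. exists (rho_cap nu I Hnu). split.
  { split; [intros A B _ _ H; apply rho_mono; auto|].
    split; [apply rho_False|apply rho_True]; auto. }
  intros x [M0 HM0].
  pose (M := Rmax M0 0).
  assert (HM : 0 <= M) by apply Rmax_r.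
  assert (Hx : forall n, Rabs (x n) <= M) by (intros n; eapply Rle_trans; [apply HM0|apply Rmax_l]).
  pose (phi := fun F : Ult I => choquet (mu (proj1_sig F)) x).
  assert (Pphi : forall F : Ult I, _) by (intros F; exact (phi_props (proj1_sig F) (ult_of I F) x M HM Hx)).
  fold phi.
  rewrite (choquet_bdd nu x M); auto.
  2:{ intros u v Huv. apply (proj1 Hnu). intros s Hs. lra. }
  2:{ apply (proj1 (proj2 Hnu)). }
  rewrite (choquet_bdd (rho_cap nu I Hnu) phi M); auto.
  2:{ intros F. apply (Pphi F). }
  2:{ intros u v Huv. apply rho_mono. intros F HF. lra. }
  2:{ apply rho_False; auto. }
  rewrite (proj2 (proj2 Hnu)), rho_True by auto.
  assert (I1 : forall t, nu (fun s => t <= x s) <= rho_cap nu I Hnu (fun F => t <= phi F)).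
  { intros t. apply rho_ub. exists (fun s => t <= x s). split; auto.
    intros F HF. apply (Pphi F). exact HF. }
  assert (I2 : forall t t', t' < t -> rho_cap nu I Hnu (fun F => t <= phi F) <= nu (fun s => t' <= x s)).
  { intros t t' Htt. apply rho_lub. intros r [A [HA ->]].
    apply (key_K nu I HI HU Hnu Hinv). intros F FA. apply ((proj1 (proj2 (Pphi F))) t t' Htt).
    apply HA; auto. }
  assert (N1 : noninc (fun t => nu (fun s => t <= x s))).
  { intros u v Huv. apply (proj1 Hnu). intros s Hs. lra. }
  assert (N2 : noninc (fun t => rho_cap nu I Hnu (fun F => t <= phi F))).
  { intros u v Huv. apply rho_mono. intros F HF. lra. }
  f_equal.
  - symmetry. apply (RInt_cmp _ _ 0 (M + 1) 1); auto; try lra.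
    intros t. pose proof (cap_nonneg nu Hnu (fun s => t <= x s)). apply Rabs_le_between. lra.
  - symmetry. apply (RInt_cmp _ _ (-(M + 1)) 0 1); try lra.
    + intros u v Huv. pose proof (N1 u v Huv). simpl in *. lra.
    + intros u v Huv. pose proof (N2 u v Huv). simpl in *. lra.
    + intros t. pose proof (cap_nonneg nu Hnu (fun s => t <= x s)). apply Rabs_le_between. lra.
    + intros t. pose proof (I1 t). lra.
    + intros t t' H. pose proof (I2 t t' H). lra.
Qed.

From mathcomp Require classical_sets filter.

Lemma UL (I : (PosNat -> Prop) -> Prop) (HI : is_ideal I) : UL_prop I.
Proof.
  intros Q HQ. destruct HI as [Hdown [Hun [HT Hfin]]].
  pose (G0 := fun S : PosNat -> Prop => exists J, I J /\ forall n, Q n -> S n \/ J n).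
  assert (I0 : I (fun _ => False)).
  { apply Hfin. exists 0%nat. intros n []. }
  assert (PF : filter.ProperFilter G0).
  { constructor.
    - intros [J [HJ H]]. apply HQ. apply (Hdown _ J HJ). intros n Qn.
      destruct (H n Qn) as [[]|h]; exact h.
    - constructor.
      + exists (fun _ => False). split; auto. intros n _. left. constructor.
      + intros A B [J1 [H1 K1]] [J2 [H2 K2]]. exists (fun n => J1 n \/ J2 n).
        split. apply Hun; auto. intros n Qn.
        destruct (K1 n Qn); destruct (K2 n Qn); try tauto.
        left. split; auto.
      + intros P P' HPP [J [HJ K]]. exists J. split; auto. intros n Qn.
        destruct (K n Qn); auto. }
  destruct (filter.ultraFilterLemma PF) as [G [UG HG]].
  assert (FG : filter.Filter G) by (destruct UG as [[_ FG] _]; exact FG).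
  assert (PG : ~ G (fun _ => False)) by (destruct UG as [[NE _] _]; exact NE).
  assert (Hult : in_Ult I G).
  { split.
    - split; [exact PG|]. split; [|split].
      + intros A B GA AB. eapply filter.filterS; [exact AB|exact GA].
      + intros A B GA GB. exact (filter.filterI GA GB).
      + intros A. exact (filter.in_ultra_setVsetC A UG).
    - intros A HA. apply HG. exists (compl A). split; [exact HA|].
      intros n _. destruct (classic (A n)); [left|right]; auto. }
  exists (exist _ G Hult). simpl. apply HG. exists (fun _ => False). split; auto.
Qed.

Theorem theorem1p1 (nu : (PosNat -> Prop) -> R) (I : (PosNat -> Prop) -> Prop)
  (Hnu : normalized_capacity nu) (HI : is_ideal I) :
  (I_invariant I nu <->
   exists rho : (Ult I -> Prop) -> R, borel_normalized_capacity I rho /\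
     forall x : PosNat -> R, ell_inf x ->
       choquet nu x = choquet rho (fun F : Ult I => choquet (mu (proj1_sig F)) x))
  /\
  (I_invariant I nu <->
   exists rho : (Ult I -> Prop) -> R, borel_normalized_capacity I rho /\
     forall A : PosNat -> Prop,
       nu A = choquet rho (fun F : Ult I => mu (proj1_sig F) A)).
Proof.
  split; split.
  - intros Hinv. exact (dir_i_ii nu I Hnu HI (UL I HI) Hinv).
  - intros [rh [Hr Hrep]]. exact (dir_ii_i nu I Hnu HI rh Hr Hrep).
  - intros Hinv. exact (dir_i_iii nu I Hnu HI (UL I HI) Hinv).
  - intros [rh [Hr Hrep]]. exact (dir_iii_i nu I HI rh Hr Hrep).
Qed.
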